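(* Let $0\le\lambda<1$ and let $Y_1,Y_2,\ldots$ be independent and identically distributed Poisson random variables with mean $\lambda$, i.e. $\Pr(Y_i=y)=\frac{\lambda^y}{y!}e^{-\lambda}$ for $y=0,1,2,\ldots$. Define the random variable $X$ by $X=0$ if $Y_1=0$, and otherwise $$X=\min\Big\{z\ge 1:\ \sum_{i=1}^{z}Y_i\le z\Big\}.$$ Then $X$ is almost surely finite, with distribution $$\Pr(X=x)=\begin{cases} e^{-\lambda}, & x=0,\\ \lambda e^{-\lambda}, & x=1,\\ \dfrac{(x-1)^{x-2}}{x\,(x-2)!}\lambda^{x}e^{-x\lambda}, & x\ge 2,\end{cases}$$ and its first two moments are $$\mathbb{E}[X]=\frac{\lambda}{1-\lambda}e^{-\lambda},\qquad \mathbb{E}[X^2]=\frac{1-\lambda+\lambda^2}{(1-\lambda)^2}\,\mathbb{E}[X].$$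
   Context: Interpretation (not needed for the statement): time is divided into slots, each containing one coded packet on the redundancy path; $Y_i$ is the number of packets lost in slot $i$ after the last decoding event, with Poisson approximation of mean $\lambda=\epsilon_c+\sum_{i\in\mathcal{P}}\alpha_i\epsilon_i$, where $\epsilon_c$ is the erasure probability of the path carrying coded packets and $\alpha_i$ is the number of information packets sent on path $i$ per coded packet; $X$ is the number of slots between consecutive decoding events. *)

(* Defs.v *)
From Stdlib Require Import Reals Lra Lia Arith List.
Import ListNotations.
Open Scope R_scope.

Definition poisson (lam : R) (y : nat) : R := lam ^ y / INR (fact y) * exp (- lam).

Definition weight (lam : R) (ys : list nat) : R :=
  fold_right (fun y acc => poisson lam y * acc) 1 ys.

Fixpoint box (n M : nat) : list (list nat) :=
  match n with
  | O => [[]]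
  | S k => flat_map (fun y => map (cons y) (box k M)) (seq 0 (S M))
  end.

(* Partial sum Y_1 + ... + Y_z of a prefix (list index 0 is Y_1). *)
Definition psum (z : nat) (ys : list nat) : nat := fold_right Nat.add 0%nat (firstn z ys).

(* The event {X = x}, decided from the prefix (Y_1, ..., Y_max(x,1)):
   X = 0 iff Y_1 = 0; for x >= 1, X = x iff Y_1 <> 0,
   sum_{i<=x} Y_i <= x, and sum_{i<=z} Y_i > z for all 1 <= z < x
   (i.e. x is the minimal such z >= 1). *)
Definition Xeqb (x : nat) (ys : list nat) : bool :=
  match x with
  | O => Nat.eqb (nth 0 ys 0%nat) 0
  | S _ =>
      negb (Nat.eqb (nth 0 ys 0%nat) 0)
      && Nat.leb (psum x ys) x
      && forallb (fun z => Nat.ltb z (psum z ys)) (seq 1 (x - 1))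
  end.

(* Probability of {X = x} AND {Y_1,...,Y_max(x,1) <= M}; as M -> oo this
   increases to Pr(X = x) (continuity of measure from below). *)
Definition trunc_prob (lam : R) (x M : nat) : R :=
  fold_right Rplus 0
    (map (fun ys => if Xeqb x ys then weight lam ys else 0)
         (box (Nat.max x 1) M)).

Definition pX (lam : R) (x : nat) : R :=
  match x with
  | O => exp (- lam)
  | S O => lam * exp (- lam)
  | _ => INR (x - 1) ^ (x - 2) / (INR x * INR (fact (x - 2)))
         * lam ^ x * exp (- INR x * lam)
  end.

(* Main.v *)
Require Import Defs.
From Stdlib Require Import Reals Lra Lia Arith List Bool.
Import ListNotations.
Open Scope R_scope.

Fixpoint sumR (f : nat -> R) (n : nat) : R :=
  match n with O => 0 | S k => sumR f k + f k end.

Lemma sumR_ext (f g : nat -> R) (n : nat) :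
  (forall i, (i < n)%nat -> f i = g i) -> sumR f n = sumR g n.
Proof.
  induction n as [|n IH]; intros H; simpl; auto.
  rewrite IH by (intros; apply H; lia). rewrite (H n) by lia. reflexivity.
Qed.

Lemma sumR_plus (f g : nat -> R) (n : nat) :
  sumR (fun i => f i + g i) n = sumR f n + sumR g n.
Proof. induction n; simpl; [lra|rewrite IHn; lra]. Qed.

Lemma sumR_minus (f g : nat -> R) (n : nat) :
  sumR (fun i => f i - g i) n = sumR f n - sumR g n.
Proof. induction n; simpl; [lra|rewrite IHn; lra]. Qed.

Lemma sumR_scal (c : R) (f : nat -> R) (n : nat) :
  sumR (fun i => c * f i) n = c * sumR f n.
Proof. induction n; simpl; [lra|rewrite IHn; lra]. Qed.

Lemma sumR_shift (f : nat -> R) (n : nat) :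
  sumR f (S n) = f O + sumR (fun i => f (S i)) n.
Proof. induction n; simpl in *; [lra|rewrite IHn; lra]. Qed.

Lemma sumR_swap (f : nat -> nat -> R) (n m : nat) :
  sumR (fun i => sumR (fun j => f i j) m) n = sumR (fun j => sumR (fun i => f i j) n) m.
Proof.
  induction n; simpl.
  - induction m; simpl; [lra|rewrite <- IHm; lra].
  - rewrite IHn. rewrite <- sumR_plus. reflexivity.
Qed.

Lemma sumR_f_R0 (f : nat -> R) (n : nat) : sumR f (S n) = sum_f_R0 f n.
Proof. induction n; simpl in *; [lra|rewrite <- IHn; reflexivity]. Qed.

Lemma sumR_le (f g : nat -> R) (n : nat) :
  (forall i, (i < n)%nat -> f i <= g i) -> sumR f n <= sumR g n.
Proof.
  induction n as [|n IH]; intros H; simpl; [lra|].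
  assert (sumR f n <= sumR g n) by (apply IH; intros; apply H; lia).
  specialize (H n ltac:(lia)). lra.
Qed.

Lemma sumR_nonneg (f : nat -> R) (n : nat) :
  (forall i, (i < n)%nat -> 0 <= f i) -> 0 <= sumR f n.
Proof.
  intros H. replace 0 with (sumR (fun _ => 0) n).
  - apply sumR_le. auto.
  - induction n; simpl; auto. rewrite IHn; [lra|intros; apply H; lia].
Qed.

Lemma sumR_zero_tail (f : nat -> R) (n m : nat) :
  (n <= m)%nat -> (forall i, (n <= i)%nat -> f i = 0) -> sumR f m = sumR f n.
Proof.
  intros Hle H. induction Hle; simpl; auto. rewrite IHHle, H by lia. lra.
Qed.

Lemma sumR_split (f : nat -> R) (n m : nat) :
  sumR f (n + m) = sumR f n + sumR (fun i => f (n + i)%nat) m.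
Proof.
  induction m; simpl. rewrite Nat.add_0_r; lra.
  rewrite Nat.add_succ_r. simpl. rewrite IHm. lra.
Qed.

Definition lsum {A} (l : list A) (g : A -> R) : R := fold_right Rplus 0 (map g l).

Lemma lsum_app {A} (l1 l2 : list A) g : lsum (l1 ++ l2) g = lsum l1 g + lsum l2 g.
Proof. unfold lsum. induction l1; simpl; [lra|rewrite IHl1; lra]. Qed.

Lemma lsum_flat_map {A B} (l : list A) (h : A -> list B) g :
  lsum (flat_map h l) g = lsum l (fun a => lsum (h a) g).
Proof.
  induction l; simpl; [reflexivity|]. rewrite lsum_app. unfold lsum in *; simpl.
  rewrite <- IHl. reflexivity.
Qed.

Lemma lsum_map {A B} (l : list A) (h : A -> B) g :
  lsum (map h l) g = lsum l (fun a => g (h a)).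
Proof. unfold lsum. rewrite map_map. reflexivity. Qed.

Lemma lsum_seq (f : nat -> R) n : lsum (seq 0 n) f = sumR f n.
Proof.
  induction n; [reflexivity|]. rewrite seq_S, lsum_app, IHn. simpl.
  unfold lsum; simpl. lra.
Qed.

Lemma lsum_ext {A} (l : list A) g h : (forall a, g a = h a) -> lsum l g = lsum l h.
Proof. intros H. unfold lsum. f_equal. apply map_ext. auto. Qed.

Lemma lsum_ext_in {A} (l : list A) g h : (forall a, In a l -> g a = h a) -> lsum l g = lsum l h.
Proof. intros H. unfold lsum. f_equal. apply map_ext_in. auto. Qed.

Lemma lsum_scal {A} (l : list A) c g : lsum l (fun a => c * g a) = c * lsum l g.
Proof. unfold lsum. induction l; simpl; [lra|rewrite IHl; lra]. Qed.

Lemma lsum_zero {A} (l : list A) : lsum l (fun _ => 0) = 0.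
Proof. unfold lsum. induction l; simpl; [lra|rewrite IHl; lra]. Qed.

Lemma box_length n M ys : In ys (box n M) -> length ys = n.
Proof.
  revert ys; induction n; intros ys H.
  - simpl in H. destruct H as [<-|[]]; reflexivity.
  - unfold box in H; fold box in H. apply in_flat_map in H. destruct H as [y [_ H]]. apply in_map_iff in H.
    destruct H as [zs [<- H]]. simpl. f_equal. auto.
Qed.


Lemma fact_S_R n : INR (fact (S n)) = INR (S n) * INR (fact n).
Proof. change (fact (S n)) with (S n * fact n)%nat. apply mult_INR. Qed.

Lemma sumR_zero (n : nat) : sumR (fun _ => 0) n = 0.
Proof. induction n; simpl; [lra|rewrite IHn; lra]. Qed.

Lemma T0 (m : nat) (a : R) :
  sumR (fun y => a ^ (m - y) / (INR (fact y) * INR (fact (m - y)))) (S m)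
  = (1 + a) ^ m / INR (fact m).
Proof.
  rewrite binomial, <- sumR_f_R0. unfold Rdiv at 2. rewrite Rmult_comm, <- sumR_scal.
  apply sumR_ext. intros i Hi. unfold C. rewrite pow1.
  pose proof (INR_fact_neq_0 m). pose proof (INR_fact_neq_0 i).
  pose proof (INR_fact_neq_0 (m - i)). field. auto.
Qed.

Lemma T1 (m : nat) (a : R) :
  sumR (fun y => INR y * a ^ (S m - y) / (INR (fact y) * INR (fact (S m - y)))) (S (S m))
  = (1 + a) ^ m / INR (fact m).
Proof.
  rewrite sumR_shift. simpl INR at 1. rewrite Rmult_0_l, Rdiv_0_l, Rplus_0_l.
  rewrite <- T0. apply sumR_ext. intros i Hi.
  replace (S m - S i)%nat with (m - i)%nat by lia. rewrite fact_S_R.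
  pose proof (INR_fact_neq_0 (m - i)). pose proof (INR_fact_neq_0 i).
  assert (INR (S i) <> 0) by (apply not_0_INR; lia). field. auto.
Qed.

Definition B (lam : R) (c n : nat) : R :=
  match c with
  | O => if Nat.eqb n 0 then 1 else 0
  | S _ => if Nat.ltb n c then 0 else
      INR c / INR n * (INR n * lam) ^ (n - c) / INR (fact (n - c)) * exp (- INR n * lam)
  end.

Lemma B_zero lam c n : (n < c)%nat -> B lam c n = 0.
Proof.
  intros H. destruct c; [lia|]. simpl B. destruct (Nat.ltb_spec n (S c)); [reflexivity|lia].
Qed.

Lemma B_00 lam : B lam 0 0 = 1.
Proof. reflexivity. Qed.

Lemma B_0S lam n : B lam 0 (S n) = 0.
Proof. reflexivity. Qed.

Lemma B_pos lam c n : (1 <= c <= n)%nat ->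
  B lam c n = INR c / INR n * (INR n * lam) ^ (n - c) / INR (fact (n - c)) * exp (- INR n * lam).
Proof.
  intros H. destruct c; [lia|]. simpl B. destruct (Nat.ltb_spec n (S c)); [lia|reflexivity].
Qed.

Lemma exp_S lam n : exp (- INR (S n) * lam) = exp (- lam) * exp (- INR n * lam).
Proof. rewrite <- exp_plus. f_equal. rewrite S_INR. ring. Qed.

Lemma B_rec0 lam c' n :
  B lam (S c') (S n) = sumR (fun y => poisson lam y * B lam (c' + y) n) (S n).
Proof.
  destruct (lt_eq_lt_dec n c') as [[Hlt|Heq]|Hgt].
  - rewrite B_zero by lia. rewrite (sumR_ext _ (fun _ => 0)), sumR_zero; [reflexivity|].
    intros i Hi. rewrite B_zero by lia. ring.
  - subst c'. rewrite sumR_shift. rewrite (sumR_ext _ (fun _ => 0)), sumR_zero.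
    2:{ intros i Hi. rewrite B_zero by lia. ring. }
    rewrite B_pos by lia. rewrite Nat.sub_diag, Nat.add_0_r.
    unfold poisson. simpl pow. simpl fact.
    destruct n.
    + rewrite B_00. replace (- INR 1 * lam) with (- lam) by (simpl; ring). simpl INR. field.
    + rewrite B_pos by lia. rewrite Nat.sub_diag. simpl pow. simpl fact.
      rewrite exp_S. assert (INR (S n) <> 0) by (apply not_0_INR; lia).
      assert (INR (S (S n)) <> 0) by (apply not_0_INR; lia).
      simpl INR. field. split; simpl in *; auto.
  -
    destruct (n - c')%nat as [|m'] eqn:Em; [lia|].
    set (m := S m').
    rewrite (sumR_zero_tail _ (S m) (S n)); [| lia |].
    2:{ intros i Hi. rewrite B_zero by lia. ring. }
    set (N := INR n).
    set (K := exp (- lam) * exp (- N * lam) * lam ^ m / N).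
    assert (HN : N <> 0) by (apply not_0_INR; lia).
    rewrite (sumR_ext _ (fun y => K * ((INR c' * (N ^ (m - y) / (INR (fact y) * INR (fact (m - y)))))
                                     + (INR y * N ^ (m - y) / (INR (fact y) * INR (fact (m - y))))))).
    2:{ intros y Hy.
        assert (Hpow : lam ^ y * (N * lam) ^ (m - y) = N ^ (m - y) * lam ^ m).
        { rewrite Rpow_mult_distr. replace (lam ^ m) with (lam ^ y * lam ^ (m - y))
            by (rewrite <- pow_add; f_equal; lia). ring. }
        pose proof (INR_fact_neq_0 y). pose proof (INR_fact_neq_0 (m - y)).
        destruct (Nat.eq_dec (c' + y) 0) as [Hc0|Hc0].
        - assert (c' = 0%nat) by lia. assert (y = 0%nat) by lia. subst.
          simpl plus. destruct n; [lia|]. rewrite B_0S. unfold K. simpl INR. field. auto.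
        - rewrite B_pos by lia. replace (n - (c' + y))%nat with (m - y)%nat by lia.
          unfold poisson, K. fold N. rewrite plus_INR.
          replace (lam ^ y / INR (fact y) * exp (- lam) *
            ((INR c' + INR y) / N * (N * lam) ^ (m - y) / INR (fact (m - y)) * exp (- N * lam)))
          with ((lam ^ y * (N * lam) ^ (m - y)) * exp (- lam) * exp (- N * lam) * (INR c' + INR y)
                / (N * INR (fact y) * INR (fact (m - y)))) by (field; auto).
          rewrite Hpow. field. auto. }
    rewrite sumR_scal, sumR_plus, sumR_scal. unfold m. rewrite T0, T1.
    rewrite B_pos by lia. replace (S n - S c')%nat with m by (unfold m; lia).
    assert (EN : N = INR c' + INR m' + 1) by (unfold N; replace n with (c' + m' + 1)%nat by lia;
                                                rewrite !plus_INR; simpl; ring).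
    unfold K, m. rewrite exp_S. fold N. rewrite (S_INR n). fold N.
    rewrite Rpow_mult_distr. rewrite <- !tech_pow_Rmult. rewrite fact_S_R. rewrite !S_INR.
    pose proof (INR_fact_neq_0 m').
    assert (0 <= INR m') by apply pos_INR. assert (0 <= INR c') by apply pos_INR.
    rewrite EN. replace (1 + (INR c' + INR m' + 1)) with (INR c' + INR m' + 1 + 1) by ring. field. repeat split; try lra.
Qed.


Lemma B_rec lam c' n N : (n <= N)%nat ->
  B lam (S c') (S n) = sumR (fun y => poisson lam y * B lam (c' + y) n) (S N).
Proof.
  intros H. rewrite B_rec0. symmetry. apply sumR_zero_tail; [lia|].
  intros i Hi. rewrite B_zero by lia. ring.
Qed.

Fixpoint hit (c : nat) (ys : list nat) : bool :=
  match ys with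
  | [] => Nat.eqb c 0
  | y :: ys' => negb (Nat.eqb c 0) && hit (c + y - 1) ys'
  end.

Definition H (lam : R) (c n M : nat) : R :=
  lsum (box n M) (fun ys => if hit c ys then weight lam ys else 0).

Lemma box_S n M : box (S n) M = flat_map (fun y => map (cons y) (box n M)) (seq 0 (S M)).
Proof. reflexivity. Qed.

Lemma H_eq_B lam n : forall c M, (n <= M)%nat -> H lam c n M = B lam c n.
Proof.
  induction n as [|n IH]; intros c M HM.
  - unfold H. simpl box. unfold lsum. simpl. destruct c; simpl; lra.
  - unfold H. rewrite box_S, lsum_flat_map, lsum_seq.
    destruct c as [|c'].
    + rewrite B_0S. rewrite (sumR_ext _ (fun _ => 0)), sumR_zero; [reflexivity|].
      intros i _. rewrite lsum_map. simpl. apply lsum_zero.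
    + rewrite (B_rec lam c' n M) by lia. apply sumR_ext. intros y Hy.
      rewrite lsum_map. simpl hit. simpl weight.
      try replace (S c' + y - 1)%nat with (c' + y)%nat by lia.
      rewrite <- (IH (c' + y)%nat M) by lia. unfold H. rewrite <- lsum_scal.
      apply lsum_ext. intros ys. rewrite Nat.sub_0_r. destruct (hit (c' + y) ys); ring.
Qed.

Definition psum' := psum.

Lemma psum_0 ys : psum 0 ys = 0%nat.
Proof. reflexivity. Qed.

Lemma psum_S z y ys : psum (S z) (y :: ys) = (y + psum z ys)%nat.
Proof. reflexivity. Qed.

Lemma psum_mono z ys : (psum z ys <= psum (S z) ys)%nat.
Proof.
  revert ys; induction z as [|z IHz]; intros [|y ys]; try (unfold psum; simpl; lia).
  rewrite !psum_S. specialize (IHz ys). lia.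
Qed.

Lemma hit_iff c ys :
  hit c ys = true <->
  ((forall z, (z < length ys)%nat -> (z < c + psum z ys)%nat) /\ (c + psum (length ys) ys = length ys)%nat).
Proof.
  revert c; induction ys as [|y ys IH]; intros c; simpl.
  - rewrite Nat.eqb_eq. unfold psum; simpl. split; [intros; split; [lia|lia]|lia].
  - rewrite andb_true_iff, negb_true_iff, Nat.eqb_neq, IH. rewrite psum_S.
    split.
    + intros [Hc [H1 H2]]. split; [|lia].
      intros [|z] Hz; [rewrite psum_0; lia|]. rewrite psum_S. specialize (H1 z ltac:(lia)). lia.
    + intros [H1 H2]. assert (Hc : (0 < c)%nat) by (specialize (H1 0%nat ltac:(lia)); rewrite psum_0 in H1; lia).
      split; [lia|]. split; [|lia].
      intros z Hz. specialize (H1 (S z) ltac:(lia)). rewrite psum_S in H1. lia.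
Qed.

Lemma Xeq_hit x' y ys : length ys = x' ->
  Xeqb (S x') (y :: ys) = negb (Nat.eqb y 0) && hit (y - 1) ys.
Proof.
  intros Hl. apply eq_true_iff_eq. unfold Xeqb.
  rewrite !andb_true_iff, hit_iff, Hl. simpl nth.
  rewrite forallb_forall, Nat.leb_le, psum_S.
  replace (S x' - 1)%nat with x' by lia.
  split.
  - intros [[Hy Hle] Hall]. apply negb_true_iff, Nat.eqb_neq in Hy. split; [apply negb_true_iff, Nat.eqb_neq; auto|].
    assert (Hz : forall z, (z < x')%nat -> (S z < y + psum z ys)%nat).
    { intros z Hz. specialize (Hall (S z)). rewrite in_seq in Hall.
      specialize (Hall ltac:(lia)). apply Nat.ltb_lt in Hall. rewrite psum_S in Hall. exact Hall. }
    split; [intros z Hz'; specialize (Hz z Hz'); lia|].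
    destruct x' as [|x'']; [rewrite psum_0 in *; lia|].
    specialize (Hz x'' ltac:(lia)). pose proof (psum_mono x'' ys). lia.
  - intros [Hy [H1 H2]]. apply negb_true_iff, Nat.eqb_neq in Hy.
    split; [split; [apply negb_true_iff, Nat.eqb_neq; auto|lia]|].
    intros z Hz. rewrite in_seq in Hz. apply Nat.ltb_lt.
    destruct z as [|z]; [lia|]. rewrite psum_S. specialize (H1 z ltac:(lia)). lia.
Qed.

Lemma trunc_S lam x' M : (S x' <= M)%nat ->
  trunc_prob lam (S x') M = sumR (fun k => poisson lam (S k) * B lam k x') (S x').
Proof.
  intros HM. unfold trunc_prob. replace (Nat.max (S x') 1) with (S x') by lia.
  change (fold_right Rplus 0 (map (fun ys => if Xeqb (S x') ys then weight lam ys else 0) (box (S x') M)))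
    with (lsum (box (S x') M) (fun ys => if Xeqb (S x') ys then weight lam ys else 0)).
  rewrite box_S, lsum_flat_map, lsum_seq.
  rewrite (sumR_ext _ (fun y => if Nat.eqb y 0 then 0 else poisson lam y * B lam (y - 1) x')).
  2:{ intros y Hy. rewrite lsum_map.
      rewrite <- (H_eq_B lam x' (y - 1) M) by lia. unfold H. rewrite <- lsum_scal.
      destruct (Nat.eqb_spec y 0).
      - subst. simpl Nat.eqb. cbv iota.
        transitivity (lsum (box x' M) (fun _ : list nat => 0)); [|apply lsum_zero].
        apply lsum_ext_in. intros ys Hin.
        rewrite Xeq_hit by (eapply box_length; eauto). reflexivity.
      - apply lsum_ext_in. intros ys Hin.
        rewrite Xeq_hit by (eapply box_length; eauto).
        destruct (Nat.eqb_spec y 0); [lia|]. simpl. destruct (hit (y - 1) ys); simpl; ring. }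
  rewrite sumR_shift. simpl Nat.eqb. rewrite Rplus_0_l.
  rewrite (sumR_ext _ (fun k => poisson lam (S k) * B lam k x')).
  2:{ intros i _. simpl. rewrite Nat.sub_0_r. reflexivity. }
  apply sumR_zero_tail; [lia|]. intros i Hi. rewrite B_zero by lia. ring.
Qed.

Lemma trunc_0 lam M : trunc_prob lam 0 M = exp (- lam).
Proof.
  unfold trunc_prob. simpl Nat.max.
  change (fold_right Rplus 0 (map (fun ys => if Xeqb 0 ys then weight lam ys else 0) (box 1 M)))
    with (lsum (box 1 M) (fun ys => if Xeqb 0 ys then weight lam ys else 0)).
  rewrite box_S, lsum_flat_map, lsum_seq, sumR_shift.
  rewrite (sumR_ext _ (fun _ => 0)), sumR_zero.
  2:{ intros i _. simpl. unfold lsum. simpl. ring. }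
  unfold lsum. simpl. unfold poisson. simpl. field.
Qed.


Lemma Tkey n :
  sumR (fun k => (INR k + 1) * INR (S n) ^ (n - k) / (INR (fact (S (S k))) * INR (fact (n - k)))) (S n)
  = INR (S n) ^ (S (S n)) / INR (fact (S (S n))).
Proof.
  set (a := INR (S n)).
  set (f := fun y => INR y * a ^ (S (S n) - y) / (INR (fact y) * INR (fact (S (S n) - y)))
                     - a ^ (S (S n) - y) / (INR (fact y) * INR (fact (S (S n) - y)))).
  assert (Hf : sumR f (S (S (S n))) = 0).
  { unfold f. rewrite sumR_minus, (T1 (S n) a), (T0 (S (S n)) a).
    assert (Ha : 1 + a = INR (S (S n))) by (unfold a; rewrite (S_INR (S n)); ring).
    rewrite Ha. set (b := INR (S (S n))).
    rewrite (fact_S_R (S n)). fold b. rewrite <- (tech_pow_Rmult _ (S n)).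
    pose proof (INR_fact_neq_0 (S n)).
    assert (b <> 0) by (apply not_0_INR; lia). field. auto. }
  rewrite sumR_shift in Hf. rewrite sumR_shift in Hf.
  assert (F0 : f 0%nat = - a ^ (S (S n)) / INR (fact (S (S n)))).
  { unfold f. rewrite Nat.sub_0_r. change (INR 0) with 0. change (fact 0) with 1%nat.
    change (INR 1) with 1. field. apply INR_fact_neq_0. }
  assert (F1 : f 1%nat = 0).
  { unfold f. change (INR 1) with 1. change (fact 1) with 1%nat. change (INR 1) with 1. field. apply INR_fact_neq_0. }
  rewrite F0, F1 in Hf.
  transitivity (sumR (fun k => f (S (S k))) (S n)).
  - apply sumR_ext. intros k _. unfold f.
    replace (S (S n) - S (S k))%nat with (n - k)%nat by lia.
    rewrite !S_INR. field. split; apply INR_fact_neq_0.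
  - lra.
Qed.

Lemma pX_eq lam x' :
  pX lam (S x') = sumR (fun k => poisson lam (S k) * B lam k x') (S x').
Proof.
  destruct x' as [|n].
  - unfold pX, sumR, B, poisson. simpl. field.
  - rewrite sumR_shift, B_0S, Rmult_0_r, Rplus_0_l.
    set (K := lam ^ S (S n) * exp (- lam) * exp (- INR (S n) * lam) / INR (S n)).
    assert (HSn : INR (S n) <> 0) by (apply not_0_INR; lia).
    rewrite (sumR_ext _ (fun k => K * ((INR k + 1) * INR (S n) ^ (n - k) / (INR (fact (S (S k))) * INR (fact (n - k)))))).
    2:{ intros k Hk. rewrite B_pos by lia. replace (S n - S k)%nat with (n - k)%nat by lia.
        unfold poisson, K. rewrite Rpow_mult_distr.
        replace (lam ^ S (S n)) with (lam ^ S (S k) * lam ^ (n - k)) by (rewrite <- pow_add; f_equal; lia).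
        rewrite (S_INR k). pose proof (INR_fact_neq_0 (S (S k))). pose proof (INR_fact_neq_0 (n - k)).
        field. auto. }
    rewrite sumR_scal, Tkey. unfold K. unfold pX.
    replace (S (S n) - 1)%nat with (S n) by lia. replace (S (S n) - 2)%nat with n by lia.
    rewrite (exp_S lam (S n)). rewrite (fact_S_R (S n)), (fact_S_R n).
    rewrite <- !tech_pow_Rmult. pose proof (INR_fact_neq_0 n).
    assert (INR (S (S n)) <> 0) by (apply not_0_INR; lia).
    field. auto.
Qed.

Lemma part1 lam x : Un_cv (fun M => trunc_prob lam x M) (pX lam x).
Proof.
  intros eps Heps. exists (S x). intros M HM. unfold Rdist.
  destruct x as [|x'].
  - rewrite trunc_0. simpl pX. rewrite Rminus_diag, Rabs_R0. lra.
  - rewrite trunc_S by lia. rewrite pX_eq, Rminus_diag, Rabs_R0. lra.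
Qed.


Lemma cv_const (l : R) : Un_cv (fun _ => l) l.
Proof. intros eps He. exists 0%nat. intros. unfold Rdist. rewrite Rminus_diag, Rabs_R0. lra. Qed.

Lemma exp_series x : Un_cv (fun N => sumR (fun i => x ^ i / INR (fact i)) (S N)) (exp x).
Proof.
  unfold exp. destruct (exist_exp x) as [l Hl]. cbn [proj1_sig]. unfold exp_in, infinite_sum in Hl.
  intros eps He. destruct (Hl eps He) as [N HN]. exists N. intros n Hn.
  cbv beta. rewrite (sumR_ext _ (fun i => / INR (fact i) * x ^ i)) by (intros; unfold Rdiv; ring).
  rewrite sumR_f_R0. apply HN; auto.
Qed.

Lemma partial_le (a : nat -> R) l : (forall i, 0 <= a i) ->
  Un_cv (fun N => sumR a (S N)) l -> forall N, sumR a (S N) <= l.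
Proof.
  intros Ha Hc N. apply (growing_ineq (fun N => sumR a (S N))); auto.
  intros n. simpl. specialize (Ha (S n)). simpl in *. lra.
Qed.

Lemma poisson_nonneg lam y : 0 <= lam -> 0 <= poisson lam y.
Proof.
  intros H. unfold poisson. apply Rmult_le_pos; [|left; apply exp_pos].
  unfold Rdiv; apply Rmult_le_pos; [apply pow_le; auto|left; apply Rinv_0_lt_compat, INR_fact_lt_0].
Qed.

Lemma Pn_cv lam : Un_cv (fun N => sumR (poisson lam) (S N)) 1.
Proof.
  replace 1 with (exp lam * exp (- lam)) by (rewrite <- exp_plus, Rplus_opp_r, exp_0; ring).
  eapply Un_cv_ext; [|apply CV_mult; [apply exp_series|apply cv_const]].
  intros N. cbv beta. rewrite Rmult_comm, <- sumR_scal. apply sumR_ext. intros; unfold poisson; ring.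
Qed.

Definition th lam := 2 - lam.
Definition EE lam := exp (lam * (1 - lam)).
Definition rr lam := EE lam / th lam.

Lemma En_cv lam : Un_cv (fun N => sumR (fun y => poisson lam y * th lam ^ y) (S N)) (EE lam).
Proof.
  unfold EE. replace (exp (lam * (1 - lam))) with (exp (lam * th lam) * exp (- lam))
    by (rewrite <- exp_plus; f_equal; unfold th; ring).
  eapply Un_cv_ext; [|apply CV_mult; [apply exp_series|apply cv_const]].
  intros N. cbv beta. rewrite Rmult_comm, <- sumR_scal. apply sumR_ext. intros.
  unfold poisson. rewrite Rpow_mult_distr. field. apply INR_fact_neq_0.
Qed.

Lemma th_ge1 lam : lam <= 1 -> 1 <= th lam.
Proof. unfold th; lra. Qed.

Lemma EE_ge1 lam : 0 <= lam <= 1 -> 1 <= EE lam.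
Proof.
  intros H. unfold EE. destruct (Req_dec (lam * (1 - lam)) 0) as [E|E].
  - rewrite E, exp_0; lra.
  - pose proof (exp_ineq1 _ E). assert (0 <= lam * (1 - lam)) by nra. lra.
Qed.

Lemma rr_pos lam : lam < 1 -> 0 < rr lam.
Proof. intros. unfold rr, th. apply Rdiv_lt_0_compat; [apply exp_pos|lra]. Qed.

Lemma rr_lt1 lam : 0 <= lam < 1 -> rr lam < 1.
Proof.
  intros H. assert (Hth : 0 < th lam) by (unfold th; lra).
  cut (EE lam < th lam).
  { intros HE. unfold rr. apply (Rmult_lt_reg_r (th lam)); [lra|]. unfold Rdiv.
    rewrite Rmult_assoc, Rinv_l by lra. lra. }
  unfold EE, th.
  set (a := lam * (1 - lam)).
  assert (Ha : 0 <= a <= 1/4) by (unfold a; pose proof (Rle_0_sqr (lam - 1/2)); unfold Rsqr in *; split; nra).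
  assert (Hb : exp a * (1 - a) <= 1).
  { destruct (Req_dec a 0) as [E|E].
    - rewrite E, exp_0. lra.
    - pose proof (exp_ineq1 (- a) ltac:(lra)).
      assert (exp a * exp (-a) = 1) by (rewrite <- exp_plus, Rplus_opp_r, exp_0; ring).
      pose proof (exp_pos a). nra. }
  assert (Hc : 1 < (2 - lam) * (1 - a)).
  { assert (E3 : (2 - lam) * (1 - a) - 1 = (1 - lam) * (1 - lam) * (1 - lam)) by (unfold a; ring).
    assert (0 < (1 - lam) * (1 - lam) * (1 - lam)) by (repeat apply Rmult_lt_0_compat; lra). lra. }
  pose proof (exp_pos a). nra.
Qed.

Lemma sumR_split' (f : nat -> R) m n : (m <= n)%nat ->
  sumR f n = sumR f m + sumR (fun i => f (m + i)%nat) (n - m).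
Proof. intros H. replace n with (m + (n - m))%nat at 1 by lia. apply sumR_split. Qed.

Lemma F2 lam N : 0 <= lam < 1 ->
  th lam ^ S N * (1 - sumR (poisson lam) (S N)) <=
  EE lam - sumR (fun y => poisson lam y * th lam ^ y) (S N).
Proof.
  intros Hl. set (t := th lam). assert (Ht : 1 <= t) by (apply th_ge1; lra).
  set (f := fun K => sumR (fun y => poisson lam y * (t ^ S N - t ^ y)) (S K)).
  assert (Hf : forall K, f K <= f N).
  { intros K. unfold f. destruct (le_lt_dec K N) as [HK|HK].
    - rewrite (sumR_split' _ (S K) (S N)) by lia.
      assert (0 <= sumR (fun i => poisson lam (S K + i) * (t ^ S N - t ^ (S K + i))) (S N - S K)).
      { apply sumR_nonneg. intros i Hi. apply Rmult_le_pos; [apply poisson_nonneg; lra|].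
        assert (t ^ (S K + i) <= t ^ S N) by (apply Rle_pow; auto; lia). lra. }
      lra.
    - rewrite (sumR_split' _ (S N) (S K)) by lia.
      assert (sumR (fun i => poisson lam (S N + i) * (t ^ S N - t ^ (S N + i))) (S K - S N) <= 0).
      { rewrite <- (sumR_zero (S K - S N)). apply sumR_le. intros i Hi.
        assert (t ^ S N <= t ^ (S N + i)) by (apply Rle_pow; auto; lia).
        pose proof (poisson_nonneg lam (S N + i) ltac:(lra)). nra. }
      lra. }
  assert (Hcv : Un_cv f (t ^ S N * 1 - EE lam)).
  { apply (Un_cv_ext (fun K => t ^ S N * sumR (poisson lam) (S K) - sumR (fun y => poisson lam y * t ^ y) (S K))).
    - intros K. unfold f. rewrite <- sumR_scal, <- sumR_minus. apply sumR_ext; intros; ring.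
    - apply CV_minus; [apply CV_mult; [apply cv_const|apply Pn_cv]|apply En_cv]. }
  assert (H : t ^ S N * 1 - EE lam <= f N).
  { eapply Rle_cv_lim; [exact Hf|exact Hcv|apply cv_const]. }
  unfold f in H. rewrite (sumR_ext _ (fun y => t ^ S N * poisson lam y - poisson lam y * t ^ y)) in H
    by (intros; ring).
  rewrite sumR_minus, sumR_scal in H. lra.
Qed.


Definition U lam N c := sumR (fun n => B lam c n) (S N).
Definition V lam N c := 1 - U lam N c.

Lemma U_0c lam N : U lam N 0 = 1.
Proof.
  unfold U. rewrite sumR_shift, B_00. rewrite (sumR_ext _ (fun _ => 0)), sumR_zero; [ring|].
  intros; apply B_0S.
Qed.

Lemma U_S0 lam c' : U lam 0 (S c') = 0.
Proof. unfold U. rewrite sumR_shift. rewrite (B_zero lam (S c') 0) by lia. simpl. ring. Qed.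

Lemma U_rec lam N c' : U lam (S N) (S c') = sumR (fun y => poisson lam y * U lam N (c' + y)) (S N).
Proof.
  unfold U. rewrite sumR_shift, B_zero, Rplus_0_l by lia.
  rewrite (sumR_ext _ (fun n => sumR (fun y => poisson lam y * B lam (c' + y) n) (S N))).
  2:{ intros n Hn. apply B_rec. lia. }
  rewrite sumR_swap. apply sumR_ext. intros; apply sumR_scal.
Qed.

Lemma V_rec lam N c' : V lam (S N) (S c') =
  (1 - sumR (poisson lam) (S N)) + sumR (fun y => poisson lam y * V lam N (c' + y)) (S N).
Proof.
  unfold V. rewrite U_rec.
  rewrite (sumR_ext (fun y => poisson lam y * (1 - U lam N (c' + y)))
                    (fun y => poisson lam y - poisson lam y * U lam N (c' + y))) by (intros; ring).
  rewrite sumR_minus. ring.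
Qed.

Lemma V_bounds lam : 0 <= lam < 1 -> forall N c,
  0 <= V lam N c <= th lam ^ c * rr lam ^ N.
Proof.
  intros Hl. assert (Ht : 1 <= th lam) by (apply th_ge1; lra).
  assert (Hr : 0 < rr lam) by (apply rr_pos; lra).
  assert (HE : 1 <= EE lam) by (apply EE_ge1; lra).
  assert (Htr : th lam * rr lam = EE lam) by (unfold rr, th in *; field; lra).
  induction N as [|N IH]; intros c.
  - destruct c as [|c'].
    + unfold V. rewrite U_0c. simpl. lra.
    + unfold V. rewrite U_S0. simpl. split; [lra|].
      pose proof (pow_le (th lam) c' ltac:(lra)).
      assert (1 <= th lam ^ c') by (apply (Rle_pow (th lam) 0 c'); [lra|lia]). nra.
  - destruct c as [|c'].
    + unfold V. rewrite U_0c. simpl. split; [lra|].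
      pose proof (pow_lt (rr lam) N Hr). nra.
    + rewrite V_rec.
      pose proof (partial_le _ _ (fun i => poisson_nonneg lam i ltac:(lra)) (Pn_cv lam) N) as HP.
      set (T := 1 - sumR (poisson lam) (S N)).
      assert (HT : 0 <= T) by (unfold T; lra).
      set (En := sumR (fun y => poisson lam y * th lam ^ y) (S N)).
      split.
      * assert (0 <= sumR (fun y => poisson lam y * V lam N (c' + y)) (S N)).
        { apply sumR_nonneg. intros i _. apply Rmult_le_pos; [apply poisson_nonneg; lra|apply IH]. }
        lra.
      * assert (Hs : sumR (fun y => poisson lam y * V lam N (c' + y)) (S N) <= th lam ^ c' * rr lam ^ N * En).
        { unfold En. rewrite <- sumR_scal. apply sumR_le. intros i _.
          pose proof (poisson_nonneg lam i ltac:(lra)). specialize (IH (c' + i)%nat).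
          rewrite pow_add in IH. nra. }
        pose proof (F2 lam N Hl) as HF. fold T En in HF.
        assert (Hk : 1 <= th lam ^ c' * rr lam ^ N * th lam ^ S N).
        { replace (th lam ^ c' * rr lam ^ N * th lam ^ S N) with (th lam ^ S c' * EE lam ^ N).
          2:{ rewrite <- Htr, Rpow_mult_distr. simpl. ring. }
          assert (1 <= th lam ^ S c') by (apply (Rle_pow (th lam) 0 (S c')); [lra|lia]).
          assert (1 <= EE lam ^ N) by (apply (Rle_pow (EE lam) 0 N); [lra|lia]). nra. }
        assert (Hpos : 0 <= th lam ^ c' * rr lam ^ N).
        { apply Rmult_le_pos; apply pow_le; lra. }
        assert (T <= th lam ^ c' * rr lam ^ N * (EE lam - En)).
        { apply Rle_trans with (th lam ^ c' * rr lam ^ N * th lam ^ S N * T); [nra|].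
          rewrite Rmult_assoc. apply Rmult_le_compat_l; auto. }
        replace (th lam ^ S c' * rr lam ^ S N) with (th lam ^ c' * rr lam ^ N * EE lam)
          by (rewrite <- Htr; simpl; ring).
        nra.
Qed.


Lemma Q_eq lam N : sumR (pX lam) (S (S N)) =
  exp (- lam) + sumR (fun k => poisson lam (S k) * U lam N k) (S N).
Proof.
  rewrite sumR_shift. f_equal.
  rewrite (sumR_ext _ (fun x' => sumR (fun k => poisson lam (S k) * B lam k x') (S N))).
  2:{ intros x' Hx. rewrite pX_eq. symmetry. apply sumR_zero_tail; [lia|].
      intros i Hi. rewrite B_zero by lia. ring. }
  rewrite sumR_swap. apply sumR_ext. intros k _. unfold U. apply sumR_scal.
Qed.

Lemma one_minus_Q lam N : 1 - sumR (pX lam) (S (S N)) =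
  (1 - sumR (poisson lam) (S (S N))) + sumR (fun k => poisson lam (S k) * V lam N k) (S N).
Proof.
  rewrite Q_eq. rewrite (sumR_shift (poisson lam)).
  unfold V. rewrite (sumR_ext (fun k => poisson lam (S k) * (1 - U lam N k))
             (fun k => poisson lam (S k) - poisson lam (S k) * U lam N k)) by (intros; ring).
  rewrite sumR_minus. unfold poisson at 2. simpl. field_simplify. ring_simplify. 
  replace (lam ^ 0 / INR (fact 0)) with 1 by (simpl; field). ring.
Qed.

Lemma Q_bounds lam N : 0 <= lam < 1 ->
  0 <= 1 - sumR (pX lam) (S (S N)) <=
  (1 - sumR (poisson lam) (S (S N))) + rr lam ^ N * EE lam.
Proof.
  intros Hl. rewrite one_minus_Q.
  pose proof (partial_le _ _ (fun i => poisson_nonneg lam i ltac:(lra)) (Pn_cv lam) (S N)) as HP.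
  assert (Ht : 1 <= th lam) by (apply th_ge1; lra).
  split.
  - assert (0 <= sumR (fun k => poisson lam (S k) * V lam N k) (S N)).
    { apply sumR_nonneg. intros i _. apply Rmult_le_pos; [apply poisson_nonneg; lra|apply V_bounds; lra]. }
    lra.
  - assert (sumR (fun k => poisson lam (S k) * V lam N k) (S N) <=
            rr lam ^ N * sumR (fun k => poisson lam (S k) * th lam ^ S k) (S N)).
    { rewrite <- sumR_scal. apply sumR_le. intros i _.
      pose proof (V_bounds lam Hl N i). pose proof (poisson_nonneg lam (S i) ltac:(lra)).
      assert (th lam ^ i <= th lam ^ S i) by (apply Rle_pow; [lra|lia]).
      pose proof (pow_lt (rr lam) N (rr_pos lam ltac:(lra))).
      apply Rle_trans with (poisson lam (S i) * (th lam ^ i * rr lam ^ N)); [apply Rmult_le_compat_l; tauto|].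
      replace (rr lam ^ N * (poisson lam (S i) * th lam ^ S i)) with ((poisson lam (S i) * rr lam ^ N) * th lam ^ S i) by ring.
      replace (poisson lam (S i) * (th lam ^ i * rr lam ^ N)) with ((poisson lam (S i) * rr lam ^ N) * th lam ^ i) by ring.
      apply Rmult_le_compat_l; [apply Rmult_le_pos; lra|auto]. }
    assert (sumR (fun k => poisson lam (S k) * th lam ^ S k) (S N) <= EE lam).
    { assert (Hnn : forall i, 0 <= poisson lam i * th lam ^ i).
      { intros i. apply Rmult_le_pos; [apply poisson_nonneg; lra|apply pow_le; lra]. }
      pose proof (partial_le _ _ Hnn
                   (En_cv lam) (S N)) as HE.
      rewrite sumR_shift in HE. pose proof (poisson_nonneg lam 0 ltac:(lra)). rewrite pow_O in HE. lra. }
    pose proof (pow_lt (rr lam) N (rr_pos lam ltac:(lra))). nra.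
Qed.

Lemma part2 lam : 0 <= lam < 1 -> infinite_sum (fun x => pX lam x) 1.
Proof.
  intros Hl eps He.
  destruct (Pn_cv lam (eps / 2) ltac:(lra)) as [N1 HN1].
  assert (HE : 1 <= EE lam) by (apply EE_ge1; lra).
  destruct (pow_lt_1_zero (rr lam) ltac:(rewrite Rabs_right; [apply rr_lt1; lra|left; apply rr_pos; lra])
            (eps / 2 / EE lam) ltac:(apply Rdiv_lt_0_compat; lra)) as [N2 HN2].
  exists (S (N1 + N2)). intros n Hn.
  destruct n as [|N]; [lia|].
  rewrite <- sumR_f_R0. unfold Rdist.
  assert (HQ := Q_bounds lam N Hl).
  change (fun x => pX lam x) with (pX lam). rewrite Rabs_left1 by lra.
  specialize (HN1 (S N) ltac:(lia)). unfold Rdist in HN1.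
  specialize (HN2 N ltac:(lia)). rewrite Rabs_right in HN2 by (apply Rle_ge, pow_le; left; apply rr_pos; lra).
  assert (rr lam ^ N * EE lam < eps / 2).
  { apply (Rmult_lt_compat_r (EE lam)) in HN2; [|lra].
    unfold Rdiv in HN2. rewrite Rmult_assoc, Rinv_l in HN2 by lra. lra. }
  destruct (Rabs_def2 _ _ HN1). lra.
Qed.

From Coquelicot Require Import Coquelicot.

Definition cc (x : nat) : R :=
  match x with
  | O => 0
  | S O => 1
  | S (S n) => INR (S n) ^ n / (INR (S (S n)) * INR (fact n))
  end.

Definition tt (lam : R) := lam * exp (- lam).

Lemma cc_SS n : cc (S (S n)) = INR (S n) ^ n / (INR (S (S n)) * INR (fact n)).
Proof. reflexivity. Qed.

Lemma cc_nonneg x : 0 <= cc x.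
Proof.
  destruct x as [|[|n]]; [simpl; lra|simpl; lra|rewrite cc_SS].
  unfold Rdiv. apply Rmult_le_pos; [apply pow_le, pos_INR|].
  left. apply Rinv_0_lt_compat, Rmult_lt_0_compat; [apply lt_0_INR; lia|apply INR_fact_lt_0].
Qed.

Lemma exp_pow_n lam n : exp (- INR n * lam) = exp (- lam) ^ n.
Proof.
  induction n. simpl. rewrite Ropp_0, Rmult_0_l, exp_0. ring.
  rewrite exp_S, IHn. simpl. ring.
Qed.

Lemma pX_cc lam x : (1 <= x)%nat -> pX lam x = cc x * tt lam ^ x.
Proof.
  intros Hx. destruct x as [|[|n]]; [lia| |].
  - unfold pX, cc, tt. simpl. ring.
  - unfold pX. replace (S (S n) - 1)%nat with (S n) by lia. replace (S (S n) - 2)%nat with n by lia.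
    rewrite exp_pow_n. rewrite cc_SS. unfold tt. rewrite Rpow_mult_distr. ring.
Qed.

Lemma series_cc lam : 0 <= lam < 1 -> is_series (fun x => cc x * tt lam ^ x) (1 - exp (- lam)).
Proof.
  intros Hl. pose proof (part2 lam Hl) as H2. apply is_series_Reals in H2.
  apply is_series_decr_1. simpl cc. 
  apply (is_series_ext (fun k => pX lam (S k))); [intros; apply pX_cc; lia|].
  apply is_series_incr_1.
  match goal with |- is_series _ ?l => replace l with 1 end.
  - exact H2.
  - unfold plus, opp; simpl. unfold pX. ring.
Qed.

Lemma infsum_cv (a : nat -> R) l : infinite_sum a l -> Un_cv (fun N => sumR a (S N)) l.
Proof.
  intros H eps He. destruct (H eps He) as [N HN]. exists N. intros n Hn. cbv beta.
  rewrite sumR_f_R0. auto.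
Qed.

Lemma tt_lt lam lam' : 0 <= lam < lam' -> lam' <= 1 -> tt lam < tt lam'.
Proof.
  intros H1 H2. unfold tt. set (d := lam' - lam).
  replace (exp (- lam')) with (exp (- lam) * exp (- d)) by (rewrite <- exp_plus; f_equal; unfold d; ring).
  pose proof (exp_ineq1 (- d) ltac:(unfold d; lra)).
  pose proof (exp_pos (- lam)).
  assert (lam < lam' * exp (- d)).
  { apply Rle_lt_trans with (lam' * (1 - d)); [|apply Rmult_lt_compat_l; lra].
    unfold d. nra. }
  nra.
Qed.

Lemma tt_nonneg lam : 0 <= lam -> 0 <= tt lam.
Proof. intros. unfold tt. pose proof (exp_pos (- lam)). nra. Qed.

Lemma radius_cc lam : 0 <= lam < 1 -> Rbar_lt (Rabs (tt lam)) (CV_radius cc).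
Proof.
  intros Hl. set (lam' := (1 + lam) / 2).
  assert (Hl' : 0 <= lam' < 1) by (unfold lam'; lra).
  assert (Htt : tt lam < tt lam') by (apply tt_lt; unfold lam'; lra).
  rewrite Rabs_right by (apply Rle_ge, tt_nonneg; lra).
  apply Rbar_lt_le_trans with (tt lam'); [simpl; exact Htt|].
  apply (proj1 (CV_radius_bounded cc)).
  exists (1 - exp (- lam')). intros n.
  pose proof (series_cc lam' Hl') as HS. apply is_series_Reals, infsum_cv in HS.
  assert (Hnn : forall i, 0 <= cc i * tt lam' ^ i).
  { intros i. apply Rmult_le_pos; [apply cc_nonneg|apply pow_le, tt_nonneg; lra]. }
  pose proof (partial_le _ _ Hnn HS n) as Hp.
  rewrite Rabs_right by (apply Rle_ge; auto).
  simpl in Hp. assert (0 <= sumR (fun x => cc x * tt lam' ^ x) n) by (apply sumR_nonneg; auto). lra.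
Qed.


Lemma tt_derive lam : is_derive tt lam ((1 - lam) * exp (- lam)).
Proof. unfold tt. auto_derive; [auto|ring]. Qed.

Lemma loc_01 lam (P : R -> Prop) : 0 < lam < 1 -> (forall y, 0 < y < 1 -> P y) -> locally lam P.
Proof.
  intros Hl HP. assert (He : 0 < Rmin lam (1 - lam)) by (apply Rmin_pos; lra).
  exists (mkposreal _ He). intros y Hy. apply HP.
  change (Rabs (y - lam) < Rmin lam (1 - lam)) in Hy.
  pose proof (Rmin_l lam (1 - lam)). pose proof (Rmin_r lam (1 - lam)).
  apply Rabs_def2 in Hy. lra.
Qed.

Lemma scal_R (a b : R) : scal a b = a * b.
Proof. reflexivity. Qed.

Lemma PS_cc_eq lam : 0 <= lam < 1 -> PSeries cc (tt lam) = 1 - exp (- lam).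
Proof.
  intros Hl. apply is_pseries_unique. apply is_pseries_R. apply series_cc; auto.
Qed.

Lemma D1_eq lam : 0 < lam < 1 -> PSeries (PS_derive cc) (tt lam) = 1 / (1 - lam).
Proof.
  intros Hl.
  assert (Hd : is_derive (fun mu => PSeries cc (tt mu)) lam
                 (scal ((1 - lam) * exp (- lam)) (PSeries (PS_derive cc) (tt lam)))).
  { apply (is_derive_comp (PSeries cc) tt); [apply is_derive_PSeries, radius_cc; lra|apply tt_derive]. }
  apply (is_derive_ext_loc _ (fun mu => 1 - exp (- mu))) in Hd.
  2:{ apply loc_01; auto. intros y Hy. apply PS_cc_eq. lra. }
  assert (Hd2 : is_derive (fun mu => 1 - exp (- mu)) lam (exp (- lam))) by (auto_derive; [auto|ring]).
  apply is_derive_unique in Hd. apply is_derive_unique in Hd2. rewrite Hd in Hd2.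
  rewrite scal_R in Hd2. pose proof (exp_pos (- lam)).
  apply (Rmult_eq_reg_l ((1 - lam) * exp (- lam))); [|apply Rmult_integral_contrapositive; split; lra].
  rewrite Hd2. field. lra.
Qed.

Lemma D2_eq lam : 0 < lam < 1 ->
  PSeries (PS_derive (PS_derive cc)) (tt lam) = 1 / ((1 - lam) ^ 3 * exp (- lam)).
Proof.
  intros Hl.
  assert (Hd : is_derive (fun mu => PSeries (PS_derive cc) (tt mu)) lam
                 (scal ((1 - lam) * exp (- lam)) (PSeries (PS_derive (PS_derive cc)) (tt lam)))).
  { apply (is_derive_comp (PSeries (PS_derive cc)) tt); [apply is_derive_PSeries; rewrite CV_radius_derive; apply radius_cc; lra|apply tt_derive]. }
  apply (is_derive_ext_loc _ (fun mu => 1 / (1 - mu))) in Hd.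
  2:{ apply loc_01; auto. intros y Hy. apply D1_eq. lra. }
  assert (Hd2 : is_derive (fun mu => 1 / (1 - mu)) lam (1 / (1 - lam) ^ 2)).
  { auto_derive; [lra|]. field. lra. }
  apply is_derive_unique in Hd. apply is_derive_unique in Hd2. rewrite Hd in Hd2.
  rewrite scal_R in Hd2. pose proof (exp_pos (- lam)).
  apply (Rmult_eq_reg_l ((1 - lam) * exp (- lam))); [|apply Rmult_integral_contrapositive; split; lra].
  rewrite Hd2. field. lra.
Qed.


Lemma moment1 lam : 0 < lam < 1 ->
  is_series (fun n => INR n * (cc n * tt lam ^ n)) (tt lam * (1 / (1 - lam))).
Proof.
  intros Hl. set (t := tt lam).
  assert (Hr : Rbar_lt (Rabs t) (CV_radius (PS_derive cc))) by (rewrite CV_radius_derive; apply radius_cc; lra).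
  pose proof (PSeries_correct _ _ (CV_radius_inside _ _ Hr)) as HP.
  unfold t in HP. rewrite D1_eq in HP by lra. fold t in HP. apply is_pseries_R in HP.
  apply (is_series_scal_r t) in HP.
  apply is_series_decr_1.
  match goal with |- is_series _ ?l => replace l with (1 / (1 - lam) * t) end.
  2:{ unfold plus, opp; simpl. ring. }
  eapply is_series_ext; [|exact HP]. intros n. cbv beta. unfold PS_derive. match goal with |- ?a = ?b => assert (E : a = b :> R) by (rewrite <- !tech_pow_Rmult; ring); exact E end.
Qed.

Lemma moment2 lam : 0 < lam < 1 ->
  is_series (fun n => INR n * (INR n - 1) * (cc n * tt lam ^ n))
    (tt lam ^ 2 * (1 / ((1 - lam) ^ 3 * exp (- lam)))).
Proof.
  intros Hl. set (t := tt lam).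
  assert (Hr : Rbar_lt (Rabs t) (CV_radius (PS_derive (PS_derive cc))))
    by (rewrite !CV_radius_derive; apply radius_cc; lra).
  pose proof (PSeries_correct _ _ (CV_radius_inside _ _ Hr)) as HP.
  unfold t in HP. rewrite D2_eq in HP by lra. fold t in HP. apply is_pseries_R in HP.
  apply (is_series_scal_r (t ^ 2)) in HP.
  apply is_series_decr_1. apply is_series_decr_1.
  match goal with |- is_series _ ?l => replace l with (1 / ((1 - lam) ^ 3 * exp (- lam)) * t ^ 2) end.
  2:{ unfold plus, opp; simpl. ring. }
  eapply is_series_ext; [|exact HP]. intros n. cbv beta. unfold PS_derive.
  match goal with |- ?a = ?b => assert (E : a = b :> R) by (rewrite !S_INR, <- !tech_pow_Rmult; ring); exact E end.
Qed.

Lemma infsum_ext (a b : nat -> R) l : (forall n, a n = b n) -> infinite_sum a l -> infinite_sum b l.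
Proof.
  intros H Ha. apply is_series_Reals. apply is_series_Reals in Ha. eapply is_series_ext; eauto.
Qed.

Lemma infsum_zero : infinite_sum (fun _ => 0) 0.
Proof.
  intros eps He. exists 0%nat. intros n _. rewrite sum_cte. unfold Rdist.
  rewrite Rmult_0_l, Rminus_diag, Rabs_R0. lra.
Qed.

Lemma pX_0_S x : (1 <= x)%nat -> pX 0 x = 0.
Proof.
  intros Hx. rewrite pX_cc by auto. unfold tt. rewrite Rmult_0_l.
  destruct x; [lia|]. simpl. ring.
Qed.

Theorem theorem2 (lam : R) (H0 : 0 <= lam) (H1 : lam < 1) :
  (forall x : nat, Un_cv (fun M => trunc_prob lam x M) (pX lam x)) /\
  infinite_sum (fun x => pX lam x) 1 /\
  infinite_sum (fun x => INR x * pX lam x) (lam / (1 - lam) * exp (- lam)) /\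
  infinite_sum (fun x => INR x ^ 2 * pX lam x)
    ((1 - lam + lam ^ 2) / (1 - lam) ^ 2 * (lam / (1 - lam) * exp (- lam))).
Proof.
  split; [apply part1|]. split; [apply part2; lra|].
  destruct (Req_dec lam 0) as [E|E].
  - subst lam. split.
    + replace (0 / (1 - 0) * exp (- 0)) with 0 by field.
      apply (infsum_ext (fun _ => 0)); [|apply infsum_zero].
      intros [|n]; [simpl; ring|]. rewrite pX_0_S by lia. ring.
    + replace ((1 - 0 + 0 ^ 2) / (1 - 0) ^ 2 * (0 / (1 - 0) * exp (- 0))) with 0 by field.
      apply (infsum_ext (fun _ => 0)); [|apply infsum_zero].
      intros [|n]; [simpl; ring|]. rewrite pX_0_S by lia. ring.
  - assert (Hl : 0 < lam < 1) by lra.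
    assert (Hpx : forall n, INR n * pX lam n = INR n * (cc n * tt lam ^ n)).
    { intros [|n]; [simpl; ring|]. rewrite pX_cc by lia. reflexivity. }
    pose proof (exp_pos (- lam)).
    split.
    + apply is_series_Reals. eapply is_series_ext; [intros n; symmetry; apply Hpx|].
      replace (lam / (1 - lam) * exp (- lam)) with (tt lam * (1 / (1 - lam))) by (unfold tt; field; lra).
      apply moment1; auto.
    + apply is_series_Reals.
      pose proof (is_series_plus _ _ _ _ (moment2 lam Hl) (moment1 lam Hl)) as HS.
      eapply is_series_ext; [|match type of HS with is_series _ ?l => replace l with
        ((1 - lam + lam ^ 2) / (1 - lam) ^ 2 * (lam / (1 - lam) * exp (- lam))) in HS end; [exact HS|]].
      * intros n. cbv beta. unfold plus; simpl. replace (INR n * (INR n * 1) * pX lam n) with (INR n * (INR n * pX lam n)) by ring. rewrite Hpx. ring.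
      * unfold plus; simpl. unfold tt. field. split; lra.
Qed.
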